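(* Let $p$ be an odd prime, $q=p^e$ with $e\ge 1$, and let $k$ be an integer with $1\le k\le e$. Then $F_{2p^k}(1,x)$ is a permutation polynomial of $\mathbb{F}_q$ if and only if $\gcd\!\left(\frac{p^k-1}{2},\,q-1\right)=1$.
   Context: For an integer $n\ge 1$, the $n$-th reversed Dickson polynomial of the third kind is $F_n(a,x)=\sum_{i=0}^{\lfloor n/2\rfloor}\frac{n-2i}{n-i}\binom{n-i}{i}(-x)^i a^{n-2i}$, where each coefficient $\frac{n-2i}{n-i}\binom{n-i}{i}$ is an integer (read in $\mathbb{F}_q$), and $F_0(a,x)=0$. A polynomial $f\in\mathbb{F}_q[x]$ is a permutation polynomial of $\mathbb{F}_q$ if $c\mapsto f(c)$ is a bijection of $\mathbb{F}_q$. *)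

(* Defs.v *)
From HB Require Import structures.
From mathcomp Require Import all_boot all_order all_algebra all_field.
Set Implicit Arguments. Unset Strict Implicit. Unset Printing Implicit Defensive.
Import GRing.Theory.
Local Open Scope ring_scope.

(* Integer coefficient (n-2i)/(n-i) * C(n-i, i), computed exactly in nat
   (the division is exact; for n >= 1 and i <= n/2 we have n - i >= 1). *)
Definition rd3_coef (n i : nat) : nat :=
  ((n - i.*2) * 'C(n - i, i) %/ (n - i))%N.

(* n-th reversed Dickson polynomial of the third kind F_n(a, x), as a
   polynomial in x over the ring R; F_0 = 0. *)
Definition rdickson3 (R : comNzRingType) (n : nat) (a : R) : {poly R} :=
  if n is 0 then 0 else
  \sum_(i < n./2.+1)
     ((rd3_coef n i)%:R * (-1) ^+ i * a ^+ (n - i.*2)) *: 'X^i.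

Definition is_perm_poly (F : finFieldType) (f : {poly F}) : Prop :=
  bijective (fun c : F => f.[c]).

(* Main.v *)
Require Import Defs.
From HB Require Import structures.
From mathcomp Require Import all_boot all_order all_algebra all_field all_fingroup all_solvable.
From mathcomp Require Import zify ring.
Set Implicit Arguments. Unset Strict Implicit. Unset Printing Implicit Defensive.
Import GRing.Theory.
Local Open Scope ring_scope.

Lemma c_bin m i : rd3_coef m.+1 i = 'C(m - i, i).
Proof.
rewrite /rd3_coef.
have [lim|gim] := leqP i m.
  have -> : (m.+1 - i.*2 = (m.+1 - i) - i)%N by lia.
  rewrite -mul_bin_down mulKn; last lia.
  by congr 'C(_,_); lia.
rewrite (_ : (m.+1 - i.*2 = 0)%N); last lia.
by rewrite mul0n div0n bin_small //; lia.
Qed.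

Lemma coefU (R : comNzRingType) n i :
  (rdickson3 n (1:R))`_i = if n is m.+1 then (-1)^+i * ('C(m-i,i))%:R else 0.
Proof.
case: n => [|m]; first by rewrite /rdickson3 coef0.
rewrite /rdickson3 coef_sum.
under eq_bigr => j _ do rewrite expr1n mulr1 coefZ coefXn.
have [ilt|ige] := ltnP i (m.+1)./2.+1.
  rewrite (bigD1 (Ordinal ilt)) //= eqxx mulr1 big1 ?addr0.
    by rewrite c_bin mulrC.
  move=> j /negP nj; case: eqP => [ij|]; last by rewrite mulr0.
  by exfalso; apply: nj; apply/eqP/val_inj; rewrite /= ij.
rewrite big1; last first.
  move=> j _; case: eqP => [ij|]; last by rewrite mulr0.
  by move: (ltn_ord j); rewrite -ij; lia.
rewrite bin_small ?mulr0 //.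
move: ige; rewrite -!divn2; lia.
Qed.

Lemma Urec (R : comNzRingType) n :
  rdickson3 n.+2 (1:R) = rdickson3 n.+1 1 - 'X * rdickson3 n 1.
Proof.
apply/polyP => i; rewrite coefB coefXM !coefU.
case: i => [|i] /=.
  by case: n => [|n] /=; rewrite ?subr0 // !subn0 !bin0.
case: n => [|n] /=.
  by rewrite subr0 !bin_small //; lia.
rewrite exprS.
have [lin|gin] := leqP i n.
  have -> : (n.+2 - i.+1 = (n - i).+1)%N by lia.
  have -> : (n.+1 - i.+1 = (n - i))%N by lia.
  rewrite binS natrD; ring.
by rewrite !bin_small; try lia; rewrite !mulr0 subr0.
Qed.
Lemma lucas (R : comNzRingType) (w : nat -> R) (x s : R) :
  w 0%N = 0 -> w 1%N = 1 -> (forall n, w n.+2 = w n.+1 - x * w n) ->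
  4%:R * x = 1 - s ^+ 2 ->
  forall n, s * w n * 2%:R ^+ n = (1 + s) ^+ n - (1 - s) ^+ n.
Proof.
move=> w0 w1 wS h4.
suff H : forall n, s * w n * 2%:R ^+ n = (1 + s) ^+ n - (1 - s) ^+ n /\
                   s * w n.+1 * 2%:R ^+ n.+1 = (1 + s) ^+ n.+1 - (1 - s) ^+ n.+1.
  by move=> n; case: (H n).
elim=> [|n [IH0 IH1]].
  by rewrite w0 w1; split; ring.
split=> //.
rewrite wS.
have -> : s * (w n.+1 - x * w n) * 2%:R ^+ n.+2 =
  2%:R * (s * w n.+1 * 2%:R ^+ n.+1) - (4%:R * x) * (s * w n * 2%:R ^+ n).
  by rewrite !exprS; ring.
rewrite IH0 IH1 h4 !exprS; ring.
Qed.

Lemma comp_polyXn' (R : comNzRingType) (p r : {poly R}) n : (p ^+ n) \Po r = (p \Po r) ^+ n.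
Proof.
elim: n => [|n IH]; first by rewrite !expr0 -polyC1 comp_polyC.
by rewrite !exprS comp_polyM IH.
Qed.

Lemma U1 (R : comNzRingType) : rdickson3 1 (1:R) = 1.
Proof.
apply/polyP => i; rewrite coefU coef1 sub0n.
by case: i => [|i]; rewrite ?expr0 ?bin0 ?mul1r // bin0n mulr0.
Qed.

Lemma four_neq0 (F : fieldType) p : prime p -> odd p -> p \in [pchar F] -> (4%:R : F) != 0.
Proof.
move=> pp op cp; rewrite -(dvdn_pcharf cp); apply/negP => d4.
have := dvdn_leq (isT : (0 < 4)%N) d4.
case: p pp op cp d4 => [|[|[|[|[|p]]]]] //.
Qed.

Lemma Uclosed (F : fieldType) p k : prime p -> odd p -> p \in [pchar F] ->
  rdickson3 (2 * p ^ k) (1:F) = (1 - (4%:R : F)%:P * 'X) ^+ ((p ^ k - 1) %/ 2).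
Proof.
move=> pp op cp.
set q := (p ^ k)%N; set m := ((q - 1) %/ 2)%N.
have oq : odd q by rewrite /q oddX op orbT.
have qm : q = (2 * m).+1.
  have oq' : (q %% 2 = 1)%N by rewrite modn2 oq.
  rewrite /m; lia.
have n4 := four_neq0 pp op cp.
set c4 := (4%:R : F)^-1.
set xs : {poly F} := c4%:P * (1 - 'X ^+ 2).
have h4 : (4%:R : F)%:P * xs = 1 - 'X ^+ 2.
  by rewrite /xs mulrA -polyCM mulfV // polyC1 mul1r.
have h4' : 4%:R * xs = 1 - 'X ^+ 2 by rewrite -polyC_natr.
set w := fun n => rdickson3 n (1:F) \Po xs.
have L := @lucas _ w xs 'X.
have E := L (comp_poly0 _) ltac:(by rewrite /w U1 -polyC1 comp_polyC)
  ltac:(by move=> n; rewrite /w Urec comp_polyB comp_polyM comp_polyX) h4' (q * 2)%N.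
rewrite mulnC.
have cP : p \in [pchar {poly F}] by rewrite pchar_poly.
have hq : [pchar {poly F}].-nat q.
  by rewrite (eq_pnat _ (pcharf_eq cP)) /q pnatX pnat_id.
have Fr : forall y : {poly F}, (1 + y) ^+ q = 1 + y ^+ q.
  by move=> y; rewrite exprDn_pchar // expr1n.
move: E; rewrite !exprM (Fr 'X) (Fr (- 'X)) exprNn_pchar // (Fr 1) expr1n.
have Xq : 'X ^+ q = 'X * ('X ^+ 2) ^+ m :> {poly F} by rewrite qm exprS exprM.
rewrite Xq => E.
have E2 : 'X * ((4%:R:F)%:P) * (w (q * 2)%N - ('X ^+ 2) ^+ m) = 0.
  have -> : (4%:R:F)%:P = (1 + 1 : {poly F}) ^+ 2.
    by rewrite polyC_natr; ring.
  transitivity ('X * w (q * 2)%N * (1 + 1) ^+ 2 - 'X * (1 + 1) ^+ 2 * ('X ^+ 2) ^+ m).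
    ring.
  rewrite E; ring.
move: E2 => /eqP; rewrite !mulf_eq0 polyX_eq0 polyC_eq0 (negbTE n4) /= subr_eq0 => /eqP E3.
apply/eqP; rewrite -subr_eq0 -(@comp_poly_eq0 _ _ xs).
  rewrite comp_polyB -/(w _) E3 comp_polyXn' comp_polyB comp_polyM comp_polyC comp_polyX.
  by rewrite comp_polyC h4 polyC1 subKr subrr.
rewrite ltnNge; apply/negP => H.
have := nth_default 0 (leq_trans H ((isT : (1 <= 2)%N))).
rewrite /xs coefCM coefB coef1 coefXn /= sub0r mulrN1 => /eqP.
by rewrite oppr_eq0 invr_eq0 (negbTE n4).
Qed.
Lemma pow_inj (F : finFieldType) m : (0 < m)%N ->
  injective (fun c : F => c ^+ m) <-> gcdn m #|F|.-1 = 1%N.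
Proof.
move=> m0; split.
  move=> inj; apply/eqP; apply/negPn/negP => ng.
  have g0 : (0 < gcdn m #|F|.-1)%N by rewrite gcdn_gt0 m0.
  have g1 : (1 < gcdn m #|F|.-1)%N by lia.
  set r := pdiv (gcdn m #|F|.-1).
  have pr : prime r := pdiv_prime g1.
  have rd : (r %| gcdn m #|F|.-1)%N := pdiv_dvd _.
  have rm : (r %| m)%N := dvdn_trans rd (dvdn_gcdl _ _).
  have rq : (r %| #|[set: {unit F}]|)%N.
    by rewrite card_finField_unit; exact: dvdn_trans rd (dvdn_gcdr _ _).
  have [u _ ou] := Cauchy pr rq.
  have um : (u ^+ m)%g = 1%g by apply/eqP; rewrite -order_dvdn ou.
  have : val u = 1.
    apply: inj => /=; rewrite -FinRing.Theory.val_unitX um expr1n; done.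
  move=> vu1.
  have : u = 1%g by apply: val_inj; rewrite vu1.
  move=> u1; move: ou; rewrite u1 order1 => r1.
  by move: pr; rewrite -r1.
move=> g1 a b hab; rewrite /= in hab.
have qpos : (0 < #|F|.-1)%N by rewrite ltn_predRL; exact: finNzRing_gt1.
have fermat : forall x : F, x != 0 -> x ^+ #|F|.-1 = 1.
  move=> x nx; apply: (mulIf nx); rewrite mul1r -exprSr prednK ?expf_card //.
  exact: (leq_trans _ (finNzRing_gt1 F)).
have [b0|nb] := eqVneq b 0.
  rewrite b0 in hab *.
  by move: hab; rewrite expr0n (negbTE (lt0n_neq0 m0)) => /eqP; rewrite expf_eq0 => /andP[_ /eqP].
have [a0|na] := eqVneq a 0.
  rewrite a0 in hab *.
  by move: hab; rewrite expr0n (negbTE (lt0n_neq0 m0)) => /esym/eqP; rewrite expf_eq0 => /andP[_ /eqP].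
set x := a / b.
have xm : x ^+ m = 1 by rewrite /x expr_div_n hab divff // expf_neq0.
have nx : x != 0 by rewrite /x mulf_neq0 ?invr_eq0.
have [c _ hc] := Bezoutl m qpos.
rewrite gcdnC g1 in hc.
have : x ^+ (1 + c * m)%N = 1.
  case/dvdnP: hc => j ->; by rewrite mulnC exprM fermat // expr1n.
rewrite exprD expr1 mulnC exprM xm expr1n mulr1 /x => /eqP.
by move=> /eqP h; rewrite -(divfK nb a) h mul1r.
Qed.

Theorem theorem2p7 (p e k : nat) (F : finFieldType) :
  prime p -> odd p -> (1 <= k <= e)%N -> #|F| = (p ^ e)%N ->
  is_perm_poly (rdickson3 (2 * p ^ k) (1 : F)) <->
  gcdn ((p ^ k - 1) %/ 2) (p ^ e - 1) = 1%N.
Proof.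
move=> pp op /andP[k1 ke] cF.
have cp : p \in [pchar F] := card_finPcharP cF pp.
rewrite /is_perm_poly Uclosed //.
set m := ((p ^ k - 1) %/ 2)%N.
have p3 : (3 <= p)%N.
  have := prime_gt1 pp; have : p != 2 by apply/eqP => p2; rewrite p2 in op.
  lia.
have ppk : (p <= p ^ k)%N by rewrite -{1}(expn1 p) leq_pexp2l // prime_gt0.
have m0 : (0 < m)%N.
  rewrite /m; move: ppk p3; set q := (p ^ k)%N; clearbody q; lia.
have -> : (p ^ e - 1)%N = #|F|.-1 by rewrite cF subn1.
rewrite -(pow_inj F m0).
have n4 := four_neq0 pp op cp.
set g := fun c : F => (1 - 4%:R * c) ^+ m.
have hg : forall c : F, ((1 - (4%:R : F)%:P * 'X) ^+ m).[c] = g c.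
  by move=> c; rewrite /g horner_exp hornerD hornerN hornerC hornerM hornerC hornerX.
have gi : forall x : F, 1 - 4%:R * ((1 - x) / 4%:R) = x.
  by move=> x; rewrite mulrC divfK // subKr.
split.
  move=> /bij_inj inj x y /= hxy.
  rewrite -(gi x) -(gi y); congr (1 - 4%:R * _).
  by apply: inj; rewrite /= !hg /g !gi.
move=> inj; apply: injF_bij => x y; rewrite !hg /g => /inj /addrI /oppr_inj.
exact: mulfI.
Qed.
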